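(* Let $I$ be an open interval with $a=\inf I$, $S$ a nonempty set, $F:I\to S$, $\varphi\in\mathrm{Homeo}^+(I)$, and $t\in I$, and suppose $F$ is $\varphi$-invariant before $t$, i.e., $F(x)=F(\varphi(x))$ for all $x\in(a,t)$. Then there is a function $H:I\to S$ that extends $F|_{(a,t)}$ and is $\varphi$-invariant, i.e., $H=H\circ\varphi$.
   Context: $\mathrm{Homeo}^+(I)$ is the group of increasing homeomorphisms of $I$. *)

(* Defs.v *)
From mathcomp Require Import all_boot all_order all_algebra.
From mathcomp Require Import all_classical all_reals all_analysis.
Set Implicit Arguments. Unset Strict Implicit. Unset Printing Implicit Defensive.
Import Order.TTheory GRing.Theory Num.Theory numFieldNormedType.Exports.
Local Open Scope classical_set_scope.
Local Open Scope ring_scope.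

(* The open interval (a, b) of R with extended-real endpoints a < b;
   then a = inf I. *)
Definition oitv {R : realType} (a b : \bar R) : set R :=
  [set x : R | (a < x%:E)%E /\ (x%:E < b)%E].

(* phi (a function R -> R, only its values on I matter) is an element of
   Homeo^+(I): an increasing homeomorphism of I onto itself. *)
Definition is_homeo_plus {R : realType} (I : set R) (phi : R -> R) : Prop :=
  (forall x, I x -> I (phi x)) /\
  (forall x y, I x -> I y -> x < y -> phi x < phi y) /\
  {within I, continuous phi} /\
  exists psi : R -> R,
    (forall x, I x -> I (psi x)) /\
    (forall x, I x -> psi (phi x) = x) /\
    (forall x, I x -> phi (psi x) = x) /\
    {within I, continuous psi}.

(* Main.v *)
Require Import Defs.
From mathcomp Require Import all_boot all_order all_algebra.
From mathcomp Require Import all_classical all_reals all_analysis.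
Import Order.TTheory GRing.Theory Num.Theory numFieldNormedType.Exports.
Local Open Scope classical_set_scope.
Local Open Scope ring_scope.

Lemma iterI (R : realType) (I : set R) (phi : R -> R) :
  (forall x, I x -> I (phi x)) -> forall n x, I x -> I (iter n phi x).
Proof. by move=> hI; elim=> [|n IH] x Ix //=; apply: hI; apply: IH. Qed.
Arguments iterI {R I phi} _ _ {x}.

Lemma phi_inj (R : realType) (I : set R) (phi : R -> R) :
  (forall x y, I x -> I y -> x < y -> phi x < phi y) ->
  forall x y, I x -> I y -> phi x = phi y -> x = y.
Proof.
move=> hm x y Ix Iy e; case: (ltgtP x y) => // h.
- by have := hm _ _ Ix Iy h; rewrite e ltxx.
- by have := hm _ _ Iy Ix h; rewrite e ltxx.
Qed.
Arguments phi_inj {R I phi} _ {x y}.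

Lemma phi_le (R : realType) (I : set R) (phi : R -> R) :
  (forall x y, I x -> I y -> x < y -> phi x < phi y) ->
  forall x y, I x -> I y -> x <= y -> phi x <= phi y.
Proof.
move=> hm x y Ix Iy; rewrite le_eqVlt => /orP[/eqP->//|h].
exact/ltW/hm.
Qed.
Arguments phi_le {R I phi} _ {x y}.

Lemma iter_inj (R : realType) (I : set R) (phi : R -> R) :
  (forall x, I x -> I (phi x)) ->
  (forall x y, I x -> I y -> x < y -> phi x < phi y) ->
  forall n x y, I x -> I y -> iter n phi x = iter n phi y -> x = y.
Proof.
move=> hI hm; elim=> [|n IH] x y Ix Iy //=.
move=> /(phi_inj hm (iterI hI n Ix) (iterI hI n Iy)).
exact: IH.
Qed.
Arguments iter_inj {R I phi} _ _ {n x y}.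

Lemma orbit_bound (R : realType) (I : set R) (phi : R -> R) (t : R) :
  (forall x, I x -> I (phi x)) ->
  (forall x y, I x -> I y -> x < y -> phi x < phi y) ->
  forall y k, I y -> y < t -> iter k phi y < t ->
  forall j, (j <= k)%N -> iter j phi y < t.
Proof.
move=> hI hm y k Iy yt kt.
have hle := phi_le hm.
have [h|h] := leP y (phi y).
- have st : forall j, iter j phi y <= iter j.+1 phi y.
    elim=> [|j IH] //=.
    apply: hle => //; [exact: (iterI hI j Iy)|exact: (iterI hI j.+1 Iy)].
  have mono : forall j k', (j <= k')%N -> iter j phi y <= iter k' phi y.
    move=> j; elim=> [|k' IH]; first by rewrite leqn0 => /eqP->.
    rewrite leq_eqVlt => /orP[/eqP->//|].
    rewrite ltnS => /IH h1; exact: le_trans h1 (st k').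
  by move=> j /mono h1; exact: le_lt_trans h1 kt.
- have st : forall j, iter j.+1 phi y <= iter j phi y.
    elim=> [|j IH] /=; first exact: ltW.
    apply: hle => //; [exact: (iterI hI j.+1 Iy)|exact: (iterI hI j Iy)].
  have bd : forall j, iter j phi y <= y.
    elim=> [|j IH] //; exact: le_trans (st j) IH.
  by move=> j _; exact: le_lt_trans (bd j) yt.
Qed.
Arguments orbit_bound {R I phi t} _ _ {y k}.

Lemma orbit_F (R : realType) (a b : \bar R) (S : Type) (F : R -> S)
  (phi : R -> R) (t : R) :
  (forall x, oitv a b x -> oitv a b (phi x)) ->
  (forall x y, oitv a b x -> oitv a b y -> x < y -> phi x < phi y) ->
  (forall x, (a < x%:E)%E -> x < t -> F x = F (phi x)) ->
  forall y k, oitv a b y -> y < t -> iter k phi y < t ->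
  F (iter k phi y) = F y.
Proof.
move=> hI hm hF y k Iy yt kt.
have bd := orbit_bound hI hm Iy yt kt.
suff : forall j, (j <= k)%N -> F (iter j phi y) = F y by apply.
elim=> [|j IH] hj //=.
rewrite -IH; last exact: ltnW.
symmetry; apply: hF; last by apply: bd; exact: ltnW.
by case: (iterI hI j Iy).
Qed.
Arguments orbit_F {R a b S F phi t} _ _ _ {y k}.

Lemma same_orbit (R : realType) (a b : \bar R) (S : Type) (F : R -> S)
  (phi : R -> R) (t : R) :
  (forall x, oitv a b x -> oitv a b (phi x)) ->
  (forall x y, oitv a b x -> oitv a b y -> x < y -> phi x < phi y) ->
  (forall x, (a < x%:E)%E -> x < t -> F x = F (phi x)) ->
  forall y y' m n, oitv a b y -> oitv a b y' -> y < t -> y' < t ->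
  iter m phi y = iter n phi y' -> F y = F y'.
Proof.
move=> hI hm hF y y' m n Iy Iy' yt yt' e.
have [nm|mn] := leqP n m.
- move: e; rewrite -(subnK nm) addnC iterD => e.
  have e' := iter_inj hI hm (iterI hI _ Iy) Iy' e.
  by rewrite -e' (orbit_F hI hm hF) // e'.
- move: e; rewrite -(subnK (ltnW mn)) addnC iterD => e.
  have e' := iter_inj hI hm Iy (iterI hI _ Iy') e.
  by rewrite e' (orbit_F hI hm hF) // -e'.
Qed.
Arguments same_orbit {R a b S F phi t} _ _ _ {y y' m n}.

Theorem lemma3p1 (R : realType) (a b : \bar R) (S : Type) (s0 : S)
  (F : R -> S) (phi : R -> R) (t : R) :
  (a < b)%E ->
  is_homeo_plus (oitv a b) phi ->
  oitv a b t ->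
  (forall x, (a < x%:E)%E -> x < t -> F x = F (phi x)) ->
  exists H : R -> S,
    (forall x, (a < x%:E)%E -> x < t -> H x = F x) /\
    (forall x, oitv a b x -> H (phi x) = H x).
Proof.
move=> ab [hI [hm _]] It hF.
set rel := fun y x => exists m n, iter m phi y = iter n phi x.
set P := fun x y => [/\ (a < y%:E)%E, y < t & rel y x].
have inI : forall y, (a < y%:E)%E -> y < t -> oitv a b y.
  move=> y ay yt; split => //; case: It => _ tb.
  by apply: lt_trans tb; rewrite lte_fin.
exists (fun x => match pselect (exists y, P x y) with
                 | left h => F (proj1_sig (cid h)) | right _ => s0 end).
split.
- move=> x ax xt; case: pselect => [h|]; last first.
    by case; exists x; split => //; exists 0%N, 0%N.
  case: (cid h) => y [ay yt [m [n e]]] /=.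
  exact: (same_orbit hI hm hF (inI _ ay yt) (inI _ ax xt) yt xt e).
- move=> x Ix.
  have eqv : forall y, rel y (phi x) <-> rel y x.
    move=> y; split => -[m [n e]].
    + by exists m, n.+1; rewrite iterSr.
    + by exists m.+1, n; rewrite iterS e -iterS iterSr.
  case: pselect => [h1|n1]; case: pselect => [h2|n2] //.
  + case: (cid h1) => y1 [ay1 yt1 r1]; case: (cid h2) => y2 [ay2 yt2 r2] /=.
    move/eqv: r1 => [m [n e1]]; case: r2 => [p [q e2]].
    apply: (same_orbit (m := (q + m)%N) (n := (n + p)%N) hI hm hF
             (inI _ ay1 yt1) (inI _ ay2 yt2) yt1 yt2).
    have -> : iter (q + m) phi y1 = iter (q + n) phi x by rewrite !iterD e1.
    rewrite [iter (n + p) _ _]iterD e2 -iterD. by rewrite addnC.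
  + by exfalso; apply: n2; case: h1 => y [? ? /eqv ?]; exists y.
  + by exfalso; apply: n1; case: h2 => y [? ? /eqv ?]; exists y.
Qed.
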